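(* Let $m\ge 2$ and let $C_1,\dots,C_m\subset\mathbb{R}^n$ be nonempty, closed, convex sets that are pairwise disjoint ($C_i\cap C_j=\varnothing$ for $i\neq j$). Let $C=C_1\times\cdots\times C_m$ and $D(a)=\sum_{i=1}^m\|a_i-a_{i+1}\|$ with $a_{m+1}=a_1$. Then $a^*=(a_1^*,\dots,a_m^* )\in C$ is an optimal solution of $\min_{a\in C}D(a)$ if and only if there exist vectors $n_i\in N_{C_i}(a_i^* )$, $i=1,\dots,m$, such that for each $i=1,\dots,m$ $$\frac{a_i^*-a_{i-1}^*}{\|a_i^*-a_{i-1}^*\|}+\frac{a_i^*-a_{i+1}^*}{\|a_i^*-a_{i+1}^*\|}+n_i=0,$$ with indices cyclic ($a_0^*=a_m^*$, $a_{m+1}^*=a_1^*$). Moreover, in this case $n_1+n_2+\cdots+n_m=0$.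
   Context: For a convex set $K\subset\mathbb{R}^n$ and $x\in K$, the normal cone is $N_K(x)=\{v\in\mathbb{R}^n:\langle v,y-x\rangle\le 0\ \forall y\in K\}$. *)

(* Defs.v *)
From HB Require Import structures.
From mathcomp Require Import all_boot all_order all_algebra.
From mathcomp Require Import all_classical all_reals all_analysis.
Set Implicit Arguments. Unset Strict Implicit. Unset Printing Implicit Defensive.
Import Order.TTheory GRing.Theory Num.Theory.
Import numFieldNormedType.Exports.
Local Open Scope ring_scope.
Local Open Scope classical_set_scope.

Definition dotv (R : realType) (n : nat) (u v : 'rV[R]_n) : R :=
  \sum_(k < n) u 0 k * v 0 k.

Definition enorm (R : realType) (n : nat) (u : 'rV[R]_n) : R :=
  Num.sqrt (dotv u u).

Definition convex_set_of (R : realType) (n : nat) (K : set 'rV[R]_n) : Prop :=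
  forall x y, K x -> K y -> forall t : R, 0 <= t <= 1 ->
    K (t *: x + (1 - t) *: y).

Definition normal_cone (R : realType) (n : nat) (K : set 'rV[R]_n) (x : 'rV[R]_n)
  : set 'rV[R]_n := [set v | forall y, K y -> dotv v (y - x) <= 0].

Definition perim (R : realType) (n m : nat) (a : 'I_m -> 'rV[R]_n) : R :=
  \sum_(i < m) enorm (a i - a (ordS i)).

Definition is_optimal (R : realType) (n m : nat) (Cs : 'I_m -> set 'rV[R]_n)
  (a : 'I_m -> 'rV[R]_n) : Prop :=
  (forall i, Cs i (a i)) /\
  forall b : 'I_m -> 'rV[R]_n, (forall i, Cs i (b i)) -> perim a <= perim b.

Definition opt_cond (R : realType) (n m : nat) (Cs : 'I_m -> set 'rV[R]_n)
  (a nv : 'I_m -> 'rV[R]_n) : Prop :=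
  (forall i, normal_cone (Cs i) (a i) (nv i)) /\
  forall i, (enorm (a i - a (ord_pred i)))^-1 *: (a i - a (ord_pred i))
          + (enorm (a i - a (ordS i)))^-1 *: (a i - a (ordS i)) + nv i = 0.

(* Main.v *)
Require Import Defs.
From HB Require Import structures.
From mathcomp Require Import all_boot all_order all_algebra.
From mathcomp Require Import all_classical all_reals all_analysis.
From mathcomp Require Import zify ring lra.
Set Implicit Arguments. Unset Strict Implicit.
Import Order.TTheory GRing.Theory Num.Theory.
Import numFieldNormedType.Exports.
Local Open Scope ring_scope.
Local Open Scope classical_set_scope.

Section Aux.
Variables (R : realType) (n : nat).
Implicit Types (u v w x : 'rV[R]_n).

Lemma dotvC u v : dotv u v = dotv v u.
Proof. by apply: eq_bigr => k _; rewrite mulrC. Qed.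

Lemma dotvDl u v w : dotv (u + v) w = dotv u w + dotv v w.
Proof. by rewrite /dotv -big_split; apply: eq_bigr => k _; rewrite mxE mulrDl. Qed.

Lemma dotvZl (c : R) u w : dotv (c *: u) w = c * dotv u w.
Proof. by rewrite /dotv mulr_sumr; apply: eq_bigr => k _; rewrite mxE mulrA. Qed.

Lemma dotvNl u w : dotv (- u) w = - dotv u w.
Proof. by rewrite /dotv -sumrN; apply: eq_bigr => k _; rewrite mxE mulNr. Qed.

Lemma dotvBl u v w : dotv (u - v) w = dotv u w - dotv v w.
Proof. by rewrite dotvDl dotvNl. Qed.

Lemma dotvDr u v w : dotv w (u + v) = dotv w u + dotv w v.
Proof. by rewrite dotvC dotvDl !(dotvC w). Qed.

Lemma dotvZr (c : R) u w : dotv w (c *: u) = c * dotv w u.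
Proof. by rewrite dotvC dotvZl dotvC. Qed.

Lemma dotvNr u w : dotv w (- u) = - dotv w u.
Proof. by rewrite dotvC dotvNl dotvC. Qed.

Lemma dotvBr u v w : dotv w (u - v) = dotv w u - dotv w v.
Proof. by rewrite dotvDr dotvNr. Qed.

Lemma dotv0l w : dotv 0 w = 0.
Proof. by rewrite -(scale0r 0) dotvZl mul0r. Qed.

Lemma dotv_ge0 u : 0 <= dotv u u.
Proof. by apply: sumr_ge0 => k _; rewrite -expr2 sqr_ge0. Qed.

Lemma dotv_eq0 u : dotv u u = 0 -> u = 0.
Proof.
move/eqP; rewrite psumr_eq0 => [/allP H|k _]; last by rewrite -expr2 sqr_ge0.
apply/matrixP => i k; rewrite ord1 mxE.
by have := H k (mem_index_enum k); rewrite /= mulf_eq0 orbb => /eqP.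
Qed.

Lemma enorm_ge0 u : 0 <= enorm u.
Proof. exact: sqrtr_ge0. Qed.

Lemma enorm_sq u : enorm u ^+ 2 = dotv u u.
Proof. by rewrite sqr_sqrtr // dotv_ge0. Qed.

Lemma enormN u : enorm (- u) = enorm u.
Proof. by rewrite /enorm dotvNl dotvNr opprK. Qed.

Lemma enorm_gt0 u : u != 0 -> 0 < enorm u.
Proof.
move=> H; rewrite /enorm sqrtr_gt0 lt_neqAle dotv_ge0 andbT.
by apply/eqP => /esym /dotv_eq0 /eqP; rewrite (negbTE H).
Qed.

Lemma enorm_eq0 {u} : enorm u = 0 -> u = 0.
Proof.
move=> H; case: (eqVneq u 0) => // /enorm_gt0; by rewrite H ltxx.
Qed.

Lemma cauchy_schwarz u v : dotv u v <= enorm u * enorm v.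
Proof.
set A := enorm u; set B := enorm v.
have [A0|Apos] := eqVneq A 0.
  by rewrite (enorm_eq0 A0) dotv0l A0 mul0r.
have [B0|Bpos] := eqVneq B 0.
  by rewrite (enorm_eq0 B0) dotvC dotv0l B0 mulr0.
have Ag : 0 < A by rewrite lt_neqAle eq_sym Apos enorm_ge0.
have Bg : 0 < B by rewrite lt_neqAle eq_sym Bpos enorm_ge0.
have := dotv_ge0 (B *: u - A *: v).
rewrite !dotvBl !dotvBr !dotvZl !dotvZr (dotvC v u) -!enorm_sq -/A -/B => H.
have H2 : A * B * dotv u v <= A * B * (A * B) by nra.
by rewrite -(ler_pM2l (mulr_gt0 Ag Bg)).
Qed.

Lemma lowerb x w : 0 < enorm x ->
  enorm x + dotv ((enorm x)^-1 *: x) w <= enorm (x + w).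
Proof.
move=> Ap; rewrite dotvZl.
have CS := cauchy_schwarz x (x + w).
rewrite dotvDr -enorm_sq in CS.
have -> : enorm x + (enorm x)^-1 * dotv x w = (enorm x ^+ 2 + dotv x w) / enorm x.
  by field; rewrite gt_eqF.
by rewrite ler_pdivrMr // mulrC.
Qed.

Lemma upperb x w : 0 < enorm x ->
  enorm (x + w) <= enorm x + dotv ((enorm x)^-1 *: x) w + dotv w w / (2 * enorm x).
Proof.
move=> Ap; rewrite dotvZl.
have E : enorm (x + w) ^+ 2 = enorm x ^+ 2 + 2 * dotv x w + dotv w w.
  by rewrite !enorm_sq !dotvDl !dotvDr (dotvC w x); ring.
have -> : enorm x + (enorm x)^-1 * dotv x w + dotv w w / (2 * enorm x)
   = (enorm x ^+ 2 + enorm (x + w) ^+ 2) / (2 * enorm x).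
  by rewrite E; field; rewrite gt_eqF.
rewrite ler_pdivlMr; last by rewrite mulr_gt0.
have := sqr_ge0 (enorm x - enorm (x + w)); rewrite sqrrB; lra.
Qed.

End Aux.

Section Main.
Variables (R : realType) (n m : nat) (a : 'I_m -> 'rV[R]_n).

Definition xv j := a j - a (ordS j).
Definition uv j := (enorm (xv j))^-1 *: xv j.
Definition gv j := uv j - uv (ord_pred j).

Lemma pred_term i :
  (enorm (a i - a (ord_pred i)))^-1 *: (a i - a (ord_pred i)) = - uv (ord_pred i).
Proof.
rewrite /uv /xv ord_predK -scalerN opprB.
by rewrite -[a i - a _]opprB enormN.
Qed.

Lemma sum_shift (F : 'I_m -> R) : \sum_j F (ord_pred j) = \sum_j F j.
Proof. by rewrite [in RHS](reindex_inj (@ord_pred_inj m)). Qed.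

Lemma sum_shiftv (F : 'I_m -> 'rV[R]_n) : \sum_j F (ord_pred j) = \sum_j F j.
Proof. by rewrite [in RHS](reindex_inj (@ord_pred_inj m)). Qed.

Lemma lin_sum (d : 'I_m -> 'rV[R]_n) :
  \sum_j dotv (uv j) (d j - d (ordS j)) = \sum_j dotv (gv j) (d j).
Proof.
under eq_bigr do rewrite dotvBr.
rewrite sumrB.
under [in RHS]eq_bigr do rewrite dotvBl.
rewrite sumrB; congr (_ - _).
rewrite -(sum_shift (fun j => dotv (uv j) (d (ordS j)))).
by apply: eq_bigr => j _; rewrite ord_predK.
Qed.

Hypothesis xpos : forall j, 0 < enorm (xv j).

Lemma perim_shift (d : 'I_m -> 'rV[R]_n) :
  perim (fun j => a j + d j) = \sum_j enorm (xv j + (d j - d (ordS j))).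
Proof. by apply: eq_bigr => j _; rewrite /xv opprD addrACA. Qed.

Lemma perim_lower (d : 'I_m -> 'rV[R]_n) :
  perim a + \sum_j dotv (gv j) (d j) <= perim (fun j => a j + d j).
Proof.
rewrite perim_shift -lin_sum /perim -big_split /=.
by apply: ler_sum => j _; apply: lowerb (xpos j).
Qed.

Lemma perim_upper (d : 'I_m -> 'rV[R]_n) :
  perim (fun j => a j + d j) <= perim a + \sum_j dotv (gv j) (d j)
    + \sum_j dotv (d j - d (ordS j)) (d j - d (ordS j)) / (2 * enorm (xv j)).
Proof.
rewrite perim_shift -lin_sum /perim -!big_split /=.
by apply: ler_sum => j _; apply: upperb (xpos j).
Qed.

End Main.

Lemma lim_arg (R : realType) (c Q : R) : 0 <= Q ->
  (forall t, 0 < t -> t <= 1 -> 0 <= c + t * Q) -> 0 <= c.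
Proof.
move=> Q0 H; rewrite leNgt; apply/negP => c0.
have tp : 0 < (- c) / (Q - c) by apply: divr_gt0; lra.
have t1 : (- c) / (Q - c) <= 1 by rewrite ler_pdivrMr; lra.
have := H _ tp t1.
have -> : c + - c / (Q - c) * Q = - (c ^+ 2) / (Q - c) by field; lra.
rewrite pmulr_lge0 ?invr_gt0; last lra.
have : 0 < c ^+ 2 by rewrite exprn_even_gt0 //= lt_eqF.
lra.
Qed.

Theorem mainTheorem5 (R : realType) (n m : nat) (Cs : 'I_m -> set 'rV[R]_n)
  (a : 'I_m -> 'rV[R]_n) :
  (2 <= m)%N ->
  (forall i, Cs i !=set0) ->
  (forall i, closed (Cs i)) ->
  (forall i, convex_set_of (Cs i)) ->
  (forall i j, i != j -> Cs i `&` Cs j = set0) ->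
  (forall i, Cs i (a i)) ->
  (is_optimal Cs a <-> exists nv, opt_cond Cs a nv) /\
  (forall nv, opt_cond Cs a nv -> \sum_(i < m) nv i = 0).
Proof.
move=> m2 _ _ cvx disj aC.
have Sne : forall i : 'I_m, i != ordS i.
  move=> [i lt]; apply/eqP=> /(congr1 val) /= E.
  case: (ltnP i.+1 m) => h; first by move: E; rewrite modn_small // => /eqP; rewrite eqn_leq ltnn andbF.
  have em : i.+1 = m by apply/eqP; rewrite eqn_leq lt h.
  by move: E m2; rewrite -em modnn => ->.
have xpos : forall j, 0 < enorm (xv a j).
  move=> j; apply: enorm_gt0; rewrite /xv subr_eq0; apply/eqP => E.
  have : (Cs j `&` Cs (ordS j)) (a j) by split => //; rewrite E.
  by rewrite disj.
have nvE : forall nv, opt_cond Cs a nv -> forall i, nv i = - gv a i.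
  move=> nv [_ H] i; have := H i; rewrite pred_term => /eqP.
  rewrite addrC addr_eq0 => /eqP ->; rewrite /gv; congr (- _); rewrite addrC.
  by [].
split; last first.
  move=> nv H; under eq_bigr do rewrite nvE //.
  rewrite sumrN /gv sumrB (sum_shiftv (uv a)) subrr oppr0 //.
split.
- move=> [_ opt]; exists (fun i => - gv a i); split; last first.
    move=> i; rewrite pred_term /gv -/(uv a i) opprB addrC addrACA subrr addNr addr0 //.
  move=> i y yC; rewrite dotvNl oppr_le0.
  set d := y - a i.
  pose dd := fun j => if j == i then d else 0.
  pose Q := \sum_j dotv (dd j - dd (ordS j)) (dd j - dd (ordS j)) / (2 * enorm (xv a j)).
  apply: (@lim_arg _ _ Q).
    apply: sumr_ge0 => j _; apply: divr_ge0; first exact: dotv_ge0.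
    by rewrite mulr_ge0 // ltW.
  move=> t t0 t1.
  have bC : forall j, Cs j (a j + t *: dd j).
    move=> j; rewrite /dd; case: eqP => [->|_]; last by rewrite scaler0 addr0.
    have -> : a i + t *: d = t *: y + (1 - t) *: a i.
      by rewrite /d scalerBr scalerBl scale1r addrCA addrA.
    by apply: cvx => //; rewrite (ltW t0) t1.
  have := le_trans (opt _ bC) (perim_upper xpos (fun j => t *: dd j)).
  have -> : \sum_j dotv (gv a j) (t *: dd j) = t * dotv (gv a i) d.
    rewrite (bigD1 i) //= big1 ?addr0; first by rewrite /dd eqxx dotvZr.
    by move=> j /negbTE ji; rewrite /dd ji scaler0 dotvC dotv0l.
  have -> : \sum_j dotv (t *: dd j - t *: dd (ordS j)) (t *: dd j - t *: dd (ordS j))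
       / (2 * enorm (xv a j)) = t ^+ 2 * Q.
    rewrite /Q mulr_sumr; apply: eq_bigr => j _.
    by rewrite -scalerBr dotvZl dotvZr mulrA -expr2 mulrA.
  move=> H.
  have : 0 <= t * (dotv (gv a i) d + t * Q) by rewrite mulrDr mulrA -expr2; lra.
  by rewrite pmulr_rge0.
- move=> [nv H]; split => // b bC.
  have E := nvE nv H.
  pose d j := b j - a j.
  have L := perim_lower xpos d.
  have eqb : perim (fun j => a j + d j) = perim b.
    by apply: eq_bigr => j _; rewrite /d !(addrC (a _)) !subrK.
  rewrite eqb in L; apply: le_trans L.
  rewrite lerDl; apply: sumr_ge0 => j _.
  rewrite -[gv a j]opprK -E dotvNl oppr_ge0.
  by case: H => /(_ j) NC _; apply: NC.
Qed.
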